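(* For each $s\in S_n$ and $w\in S_n$, the action of $s$ on the Schubert class $[\Omega_w]\in H^*_T(G/B)$ has the form $$s\cdot[\Omega_w]=[\Omega_w]+\sum_{v<w}c_v[\Omega_v]$$ for some polynomials $c_v\in\mathbb{C}[t_1,\ldots,t_n]$, where each nonzero $c_v$ has degree $\ell(w)-\ell(v)$.
   Context: Let $G=GL_n(\mathbb{C})$, $B$ (resp. $B^-$) the invertible upper- (resp. lower-) triangular matrices, and $T$ the diagonal torus. Permutations are identified with permutation matrices via $we_i=e_{w(i)}$, and $s_{jk}$ is the transposition of $j,k$. The Bruhat order is $v\le w$ iff $BvB/B\subseteq\overline{BwB/B}$. $\mathrm{Inv}(w)=\{t_i-t_j:i<j,\ w^{-1}(i)>w^{-1}(j)\}$ and $\ell(w)=|\mathrm{Inv}(w)|$. In GKM form, $H^*_T(G/B)$ is the ring of tuples $(p_u)_{u\in S_n}$, $p_u\in\mathbb{C}[t_1,\ldots,t_n]$, with $p_u-p_{s_{jk}u}\in\langle t_j-t_k\rangle$ for all $u$ and $j<k$. $S_n$ acts on polynomials by $(u\cdot f)(t_1,\ldots,t_n)=f(t_{u(1)},\ldots,t_{u(n)})$ and on $H^*_T(G/B)$ by $(u\cdot p)_v=u\cdot p_{u^{-1}v}$. The Schubert class $[\Omega_v]=(p^v_u)_u$ is the equivariant class of $\overline{B^-vB/B}$; equivalently, it is the unique class with $p^v_u=0$ unless $u\ge v$, each nonzero $p^v_u$ homogeneous of degree $\ell(v)$, and $p^v_v=\prod_{\beta\in\mathrm{Inv}(v)}\beta$.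 The Schubert classes form a $\mathbb{C}[t_1,\ldots,t_n]$-basis of $H^*_T(G/B)$. *)

(* Defs.v *)
From HB Require Import structures.
From mathcomp Require Import all_boot all_order all_algebra all_fingroup.
From mathcomp Require Import multinomials.mpoly.
From mathcomp Require Import complex.
From mathcomp Require Import reals.

Set Implicit Arguments.
Unset Strict Implicit.
Unset Printing Implicit Defensive.

Import Order.TTheory GRing.Theory Num.Theory.
Local Open Scope ring_scope.

(* S_n is 'S_n, permutations of the index set 'I_n = {0,..,n-1}
   (0-based version of {1,..,n}); the variable t_i is 'X_i.
   Composition of permutations a o b (first b, then a) is written pcomp a b;
   note mathcomp's product satisfies (b * a)%g x = a (b x). *)
Definition pcomp (n : nat) (a b : 'S_n) : 'S_n := (b * a)%g.

(* The coefficient ring C[t_1,...,t_n], with C = R[i] for a real field R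
   of type realType (i.e. C = the complex numbers). *)
Definition Cpoly (R : realType) (n : nat) := {mpoly (complex R)[n]}.

(* Bruhat order on permutation matrices (w e_i = e_{w(i)}, B upper
   triangular): v <= w iff for all p, q,
     #{ j < q | v(j) >= p } <= #{ j < q | w(j) >= p }
   (rank conditions on the south-west submatrices). *)
Definition bruhat_le (n : nat) (v w : 'S_n) : bool :=
  [forall p : 'I_n.+1, forall q : 'I_n.+1,
     #|[set j : 'I_n | (j < q)%N && (p <= v j)%N]|
       <= #|[set j : 'I_n | (j < q)%N && (p <= w j)%N]| ]%N.

Definition bruhat_lt (n : nat) (v w : 'S_n) : bool :=
  (v != w) && bruhat_le v w.

(* Inv(w) = { t_i - t_j : i < j, w^-1(i) > w^-1(j) }, indexed by pairs. *)
Definition inv_pair (n : nat) (w : 'S_n) (ij : 'I_n * 'I_n) : bool :=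
  (ij.1 < ij.2)%N && ((w^-1)%g ij.2 < (w^-1)%g ij.1)%N.

Definition len (n : nat) (w : 'S_n) : nat := #|[set ij | inv_pair w ij]|.

Definition inv_prod (R : realType) (n : nat) (w : 'S_n) : Cpoly R n :=
  \prod_(ij | inv_pair w ij) ('X_ij.1 - 'X_ij.2).

(* Action of u on polynomials: (u.f)(t_1,..,t_n) = f(t_{u(1)},..,t_{u(n)}),
   i.e. substitute t_i := t_{u(i)}; this is mpoly's msym. *)
Definition poly_act (R : realType) (n : nat) (u : 'S_n) (f : Cpoly R n)
  : Cpoly R n := msym u f.

(* GKM presentation: tuples (p_u)_{u in S_n}. *)
Definition mdivides (R : realType) (n : nat) (d f : Cpoly R n) : Prop :=
  exists g : Cpoly R n, f = g * d.

Definition is_gkm_class (R : realType) (n : nat) (p : 'S_n -> Cpoly R n)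
  : Prop :=
  forall (u : 'S_n) (j k : 'I_n), (j < k)%N ->
    mdivides ('X_j - 'X_k) (p u - p (pcomp (tperm j k) u)).

Definition class_act (R : realType) (n : nat) (u : 'S_n)
  (p : 'S_n -> Cpoly R n) : 'S_n -> Cpoly R n :=
  fun v => poly_act u (p (pcomp (u^-1)%g v)).

(* The Schubert class [Omega_v], via its characterization: the class
   supported on {u >= v}, with each nonzero component homogeneous of
   degree l(v), and p_v = prod_{beta in Inv(v)} beta. *)
Definition is_schubert_class (R : realType) (n : nat) (v : 'S_n)
  (p : 'S_n -> Cpoly R n) : Prop :=
  [/\ is_gkm_class p,
      (forall u, ~~ bruhat_le v u -> p u = 0),
      (forall u, p u != 0 -> p u \is (len v).-homog)
    & p v = inv_prod R v].

(* Main.v *)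
Require Import Defs.
From HB Require Import structures.
From mathcomp Require Import all_boot all_order all_algebra all_fingroup.
From mathcomp Require Import multinomials.mpoly.
From mathcomp Require Import complex.
From mathcomp Require Import reals.
From mathcomp Require Import zify ring.

Import GRing.Theory.
Local Open Scope ring_scope.
Lemma ordE m (a b : 'I_m) : (a == b) = (a == b :> nat). Proof. by []. Qed.

Section Comb.
Variable n : nat.
Implicit Types (v w x y : 'S_n).

Lemma sum_two (f g : 'I_n -> nat) (a b : 'I_n) : a != b ->
  (forall j, j != a -> j != b -> f j = g j) ->
  (\sum_j f j + g a + g b = \sum_j g j + f a + f b)%N.
Proof.
move=> ab H.
have E : forall h : 'I_n -> nat,
    (\sum_j h j = h a + h b + \sum_(j | (j != a) && (j != b)) h j)%N.
  move=> h; rewrite (bigD1 a) //= (bigD1 b) 1?eq_sym //= addnA.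
  by congr (_ + _)%N; apply: eq_bigl => j; rewrite andbC.
have eS : (\sum_(j | (j != a) && (j != b)) f j = \sum_(j | (j != a) && (j != b)) g j)%N.
  by apply: eq_bigr => j /andP[ja jb]; apply: H.
rewrite !E eS; lia.
Qed.

Lemma sum_one (f g : 'I_n -> nat) (a : 'I_n) :
  (forall j, j != a -> f j = g j) ->
  (\sum_j f j + g a = \sum_j g j + f a)%N.
Proof.
move=> H.
have E : forall h : 'I_n -> nat, (\sum_j h j = h a + \sum_(j | j != a) h j)%N.
  by move=> h; rewrite (bigD1 a).
rewrite !E.
have eS : (\sum_(j | j != a) f j = \sum_(j | j != a) g j)%N.
  by apply: eq_bigr => j ja; apply: H.
rewrite eS; lia.
Qed.

Lemma card_sum (P : pred 'I_n) : #|[set j | P j]| = (\sum_j (P j : nat))%N.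
Proof.
rewrite -sum1_card big_mkcond /=; apply: eq_bigr => j _; rewrite inE.
by case: (P j).
Qed.

Definition rk v (p q : nat) : nat := #|[set j : 'I_n | (j < q)%N && (p <= v j)%N]|.

Lemma bruhatP v w :
  reflect (forall p q : 'I_n.+1, rk v p q <= rk w p q)%N (bruhat_le v w).
Proof.
apply: (iffP forallP) => [H p q | H p]; first by have /forallP := H p; apply.
by apply/forallP => q; apply: H.
Qed.

Lemma bruhat_refl v : bruhat_le v v.
Proof. by apply/bruhatP. Qed.

Lemma bruhat_trans v x w : bruhat_le v x -> bruhat_le x w -> bruhat_le v w.
Proof.
move=> /bruhatP H1 /bruhatP H2; apply/bruhatP => p q.
exact: leq_trans (H1 p q) (H2 p q).
Qed.

Lemma invM_tperm x (j k z : 'I_n) : ((x * tperm j k)^-1)%g z = (x^-1)%g (tperm j k z).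
Proof. by rewrite invMg permM tpermV. Qed.

Lemma len_le_sq x : (len x <= n * n)%N.
Proof.
rewrite /len; apply: leq_trans (max_card _) _.
by rewrite card_prod card_ord.
Qed.



Lemma inv_tperm_sub x (j k : 'I_n) : (j < k)%N ->
  ((k : nat) = j.+1 \/ Defs.inv_pair x (j,k)) ->
  (#|[set ij | Defs.inv_pair (x * tperm j k) ij] :\ (j,k)| <=
   #|[set ij | Defs.inv_pair x ij] :\ (j,k)|)%N.
Proof.
move=> jk H.
set t := tperm j k.
pose psi (p : 'I_n * 'I_n) := if (t p.1 < t p.2)%N then (t p.1, t p.2) else p.
have psiK : {in [set ij | Defs.inv_pair (x * t) ij] :\ (j,k), cancel psi psi}.
  move=> [a b]; rewrite !inE /Defs.inv_pair /= => /andP[_ /andP[ab _]].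
  rewrite /psi /=; case tab: (t a < t b)%N => /=; last by rewrite tab.
  by rewrite /t !tpermK ab.
rewrite -(card_in_imset (can_in_inj psiK)); apply: subset_leq_card.
apply/subsetP => _ /imsetP[[a b] Hp ->].
move: Hp; rewrite !inE /Defs.inv_pair /= !invM_tperm /psi /=.
have H' : (k : nat) = j.+1 \/ ((x^-1)%g k < (x^-1)%g j)%N.
  by case: H => [->|/andP[]]; auto.
rewrite /t.
case: (tpermP j k a) => [->|->|/eqP naj /eqP nak];
case: (tpermP j k b) => [->|->|/eqP nbj /eqP nbk];
rewrite ?tpermL ?tpermR ?tpermD //= ?xpair_eqE ?ordE; try lia.
all: case: ifP => /= ?; rewrite ?xpair_eqE ?ordE; try lia.
Qed.

Lemma inv_tperm_jk x (j k : 'I_n) : (j < k)%N ->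
  Defs.inv_pair (x * tperm j k) (j,k) = ~~ Defs.inv_pair x (j,k).
Proof.
move=> jk; rewrite /Defs.inv_pair /= !invM_tperm tpermL tpermR jk /=.
have jnk : j != k by rewrite ordE; lia.
have : (x^-1)%g k != (x^-1)%g j by rewrite (inj_eq perm_inj) eq_sym.
rewrite ordE; lia.
Qed.

Lemma lenE x (j k : 'I_n) : len x = (Defs.inv_pair x (j,k) + 
   #|[set ij | Defs.inv_pair x ij] :\ (j,k)|)%N.
Proof. by rewrite /len (cardsD1 (j,k)) inE. Qed.

Lemma len_tperm_lt x (j k : 'I_n) : (j < k)%N -> Defs.inv_pair x (j,k) ->
  (len (x * tperm j k) < len x)%N.
Proof.
move=> jk hi.
have := inv_tperm_sub x j k jk (or_intror hi).
rewrite (lenE x j k) (lenE (x * tperm j k) j k) inv_tperm_jk // hi /=.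
lia.
Qed.

Lemma len_adj x (j k : 'I_n) : (k : nat) = j.+1 ->
  (len (x * tperm j k) + Defs.inv_pair x (j,k) = len x + ~~ Defs.inv_pair x (j,k))%N.
Proof.
move=> kj.
have jk : (j < k)%N by lia.
have h1 := inv_tperm_sub x j k jk (or_introl kj).
have h2 := inv_tperm_sub (x * tperm j k) j k jk (or_introl kj).
rewrite -mulgA tperm2 mulg1 in h2.
rewrite (lenE x j k) (lenE (x * tperm j k) j k) inv_tperm_jk //.
rewrite (@anti_leq _ _ (introT andP (conj h1 h2))).
case: (Defs.inv_pair x (j,k)) => /=; lia.
Qed.


Lemma rk_sum v p q : rk v p q = (\sum_(j : 'I_n) ((j < q)%N && (p <= v j)%N : nat))%N.
Proof. by rewrite /rk card_sum. Qed.

Lemma swap_val v (a b : 'I_n) :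
  [/\ (v * tperm (v a) (v b))%g a = v b, (v * tperm (v a) (v b))%g b = v a &
      forall j, j != a -> j != b -> (v * tperm (v a) (v b))%g j = v j].
Proof.
split; rewrite ?permM ?tpermL ?tpermR //.
move=> j ja jb; rewrite permM tpermD // (inj_eq perm_inj) eq_sym //.
Qed.

Lemma rk_swap v (a b : 'I_n) p q : a != b ->
  (rk (v * tperm (v a) (v b)) p q + ((a < q)%N && (p <= v a)%N) + ((b < q)%N && (p <= v b)%N) =
   rk v p q + ((a < q)%N && (p <= v b)%N) + ((b < q)%N && (p <= v a)%N))%N.
Proof.
move=> ab; have [e1 e2 e3] := swap_val v a b.
rewrite !rk_sum.
have := sum_two (fun j => ((j < q)%N && (p <= (v * tperm (v a) (v b))%g j)%N : nat))
   (fun j => ((j < q)%N && (p <= v j)%N : nat)) a b ab.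
rewrite /= e1 e2; apply => j ja jb; by rewrite e3.
Qed.

Lemma nat_swap_le (a b q p va vb : nat) : (a < b)%N -> (va < vb)%N ->
  (((a < q)%N && (p <= va)%N) + ((b < q)%N && (p <= vb)%N) <=
   ((a < q)%N && (p <= vb)%N) + ((b < q)%N && (p <= va)%N))%N.
Proof.
move=> ab vab.
case: (ltnP a q); case: (ltnP b q); case: (leqP p va); case: (leqP p vb) => /=; lia.
Qed.

Lemma bruhat_swap v (a b : 'I_n) : (a < b)%N -> (v a < v b)%N ->
  bruhat_le v (v * tperm (v a) (v b)).
Proof.
move=> ab vab; apply/bruhatP => p q.
have ab' : a != b by rewrite ordE; lia.
have := rk_swap v a b p q ab'.
have := nat_swap_le a b q p (v a) (v b) ab vab.
move: (rk v p q) (rk (v * tperm (v a) (v b)) p q) => r1 r2.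
move: (nat_of_bool _) (nat_of_bool _) (nat_of_bool _) (nat_of_bool _) => A B C D.
lia.
Qed.

Lemma nat_rect (a b q p va vb : nat) : (a < b)%N -> (va < vb)%N ->
  ~~ [&& (a < q)%N, (q <= b)%N, (va < p)%N & (p <= vb)%N] ->
  (((a < q)%N && (p <= vb)%N) + ((b < q)%N && (p <= va)%N) <=
   ((a < q)%N && (p <= va)%N) + ((b < q)%N && (p <= vb)%N))%N.
Proof.
move=> ab vab.
case: (ltnP a q); case: (ltnP b q); case: (leqP p va); case: (leqP p vb) => /=; lia.
Qed.

Lemma nat_ptw (j a q b p va vb X vj wj : nat) : (a < q)%N -> (q <= b)%N ->
  (va < p)%N -> (p <= vb)%N -> (vb <= X)%N ->
  ((j < a)%N -> vj = wj) -> (j = a -> wj = X /\ vj = va) ->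
  ((a < j)%N -> (j < b)%N -> ~~ ((va < vj)%N && (vj <= X)%N)) ->
  (((j < q)%N && (p <= vj)%N) + (j == a) + ((j < q)%N && (X.+1 <= wj)%N) <=
   ((j < q)%N && (p <= wj)%N) + ((j < q)%N && (X.+1 <= vj)%N))%N.
Proof.
move=> aq qb vap pvb vbX h1 h2 h3.
case: eqP => [ja|jna].
  have [e1 e2] := h2 ja; subst.
  case: (ltnP a q); case: (leqP p va); case: (leqP p X); case: (leqP X.+1 X); case: (leqP X.+1 va) => /=; lia.
case: (ltngtP j a) => ja.
- rewrite h1 //.
  case: (ltnP j q); case: (leqP p wj); case: (leqP X.+1 wj) => /=; lia.
- case: (ltnP j q) => jq /=; last by [].
  have /negP h := h3 ja (leq_trans jq qb).
  case: (leqP p vj); case: (leqP p wj); case: (leqP X.+1 wj); case: (leqP X.+1 vj) => /=;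
  try lia; move=> *; apply: False_ind; apply: h; apply/andP; split; lia.
- by [].
Qed.

Lemma sum_eq1 (a : 'I_n) : (\sum_(j : 'I_n) (((j : nat) == a) : nat))%N = 1%N.
Proof.
rewrite (bigD1 a) //= eqxx big1 // => j ja.
by case: eqP => //= e; case/eqP: ja; apply: val_inj.
Qed.

Lemma natP2 (r1 r2 r3 A B C D : nat) : (C + D <= A + B)%N ->
  (r2 + A + B = r1 + C + D)%N -> (r1 <= r3)%N -> (r2 <= r3)%N.
Proof. lia. Qed.

Lemma bruhat_chain v w : bruhat_le v w -> v != w ->
  exists v', bruhat_le v' w /\ (len v < len v')%N.
Proof.
move=> /bruhatP vw nvw.
have [a0 ha0] : exists a, v a != w a.
  case: (pickP (fun a => v a != w a)) => [a ha|H]; first by exists a.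
  by case/eqP: nvw; apply/permP => x; have := H x; move/negbFE/eqP.
case: (@arg_minnP _ a0 (fun i => v i != w i) (fun i : 'I_n => i : nat) ha0) => a ha amin.
have pre : forall j : 'I_n, (j < a)%N -> v j = w j.
  move=> j ja; apply/eqP; apply/negP => /negP /amin; lia.
have va_lt : (v a < w a)%N.
  have := vw (Ordinal (leqW (ltn_ord (v a)))) (@Ordinal n.+1 a.+1 (ltn_ord a)).
  rewrite !rk_sum /=.
  have := sum_one (fun j : 'I_n => ((j < a.+1)%N && (v a <= v j)%N : nat))
     (fun j : 'I_n => ((j < a.+1)%N && (v a <= w j)%N : nat)) a.
  rewrite /= ltnSn leqnn /=.
  have e : forall j : 'I_n, j != a -> ((j < a.+1)%N && (v a <= v j)%N : nat) = ((j < a.+1)%N && (v a <= w j)%N : nat).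
    move=> j ja; case: (ltngtP j a) => h; first by rewrite (pre j h).
      by rewrite ltnS leqNgt h.
    by move/val_inj: h ja => ->; rewrite eqxx.
  move=> /(_ e).
  move: ha; rewrite ordE => ha.
  case: (leqP (v a) (w a)) => /=; lia.
pose X := w a.
pose c := ((v^-1)%g X).
have vc : v c = X by rewrite permKV.
have ac : (a < c)%N.
  case: (ltngtP a c) => // h.
  - have := pre c h; rewrite vc => /perm_inj e. rewrite -e in h; lia.
  - have e : c = a by apply: val_inj.
    by move: va_lt; rewrite -e vc /X e ltnn.
have Pc : (a < c)%N && ((v a < v c)%N && (v c <= X)%N) by rewrite ac vc va_lt leqnn.
case: (@arg_minnP _ c (fun i : 'I_n => (a < i)%N && ((v a < v i)%N && (v i <= X)%N)) (fun i : 'I_n => i : nat) Pc) => b /andP[ab /andP[vab vbX]] bmin.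
exists (v * tperm (v a) (v b))%g; split; last first.
  have ab' : a != b by rewrite ordE; lia.
  have [e1 e2 e3] := swap_val v a b.
  have := len_tperm_lt (v * tperm (v a) (v b)) (v a) (v b) vab.
  rewrite -mulgA tperm2 mulg1; apply.
  by rewrite /Defs.inv_pair /= !invM_tperm tpermL tpermR !permK vab.
apply/bruhatP => p q.
have ab' : a != b by rewrite ordE; lia.
have := rk_swap v a b p q ab'.
have := vw p q.
case R : [&& (a < q)%N, (q <= b)%N, (v a < p)%N & (p <= v b)%N]; last first.
  move=> h1 h2; have h3 := nat_rect a b q p (v a) (v b) ab vab (negbT R).
  exact: natP2 h3 h2 h1.
move/and4P: R => [aq qb vap pvb].
have e1 : ((a < q)%N && (p <= v a)%N) = false by apply/negbTE/negP => /andP[_ h]; lia.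
have e2 : (b < q)%N = false by apply/negbTE/negP => h; lia.
have e3 : ((a < q)%N && (p <= v b)%N) = true by rewrite aq pvb.
rewrite e1 e2 e3 /= => hvw hsw.
have XS : (X.+1 < n.+1)%N by rewrite ltnS ltn_ord.
have hX := vw (Ordinal XS) q.
have hs : (\sum_(j : 'I_n) (((j < q)%N && (p <= v j)%N) + ((j : nat) == a) + ((j < q)%N && (X.+1 <= w j)%N))
   <= \sum_(j : 'I_n) (((j < q)%N && (p <= w j)%N) + ((j < q)%N && (X.+1 <= v j)%N)))%N.
  apply: leq_sum => j _; apply: (nat_ptw j a q b p (v a) (v b) X (v j) (w j)) => //.
  - by move=> h; rewrite (pre j h).
  - move=> e; have e' : j = a by apply: val_inj.
    by rewrite e'.
  - move=> h1 h2; apply/negP => h3; have := bmin j; rewrite h1 h3 /= => /(_ isT); lia.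
rewrite !big_split /= sum_eq1 -!rk_sum in hs.
move: hs hX hsw; rewrite /=.
move: (rk v p q) (rk w p q) (rk v X.+1 q) (rk w X.+1 q) (rk (v * tperm (v a) (v b))%g p q) => r1 r2 r3 r4 r5.
lia.
Qed.

Lemma bruhat_len_lt v w : bruhat_le v w -> v != w -> (len v < len w)%N.
Proof.
suff H : forall k v, (n * n - len v <= k)%N -> forall w, bruhat_le v w -> v != w -> (len v < len w)%N.
  by move=> vw nvw; apply: (H _ v (leqnn _)).
elim=> [|k IH] {}v hk {}w vw nvw; have [v' [v'w lvv']] := bruhat_chain v w vw nvw.
- have := len_le_sq v'; lia.
- case: (eqVneq v' w) => [<- //|nv'w].
  have hk' : (n * n - len v' <= k)%N by have := len_le_sq v'; lia.
  exact: ltn_trans lvv' (IH v' hk' w v'w nv'w).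
Qed.

Lemma bruhat_len_le v w : bruhat_le v w -> (len v <= len w)%N.
Proof.
move=> vw; case: (eqVneq v w) => [->//|nvw]; exact/ltnW/bruhat_len_lt.
Qed.

End Comb.
Section Poly.
Variable R : realType.
Variable n : nat.
Local Notation P := (Cpoly R n).
Local Notation F := (complex R).

Definition Xd (a b : 'I_n) : P := 'X_a - 'X_b.

Lemma div_closure (psi : P -> P) (d : P) :
  (forall f g, psi (f + g) = psi f + psi g) ->
  (forall f g, psi (f * g) = psi f * psi g) ->
  psi 1 = 1 ->
  (forall (c : F) f, psi (c *: f) = c *: psi f) ->
  (forall i, mdivides d ('X_i - psi 'X_i)) ->
  forall f, mdivides d (f - psi f).
Proof.
move=> hD hM h1 hZ hX.
have h0 : psi 0 = 0 by apply: (addrI (psi 0)); rewrite -hD !addr0.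
have Dadd : forall f g, mdivides d (f - psi f) -> mdivides d (g - psi g) ->
    mdivides d ((f + g) - psi (f + g)).
  move=> f g [gf ef] [gg eg]; exists (gf + gg).
  by rewrite hD mulrDl -ef -eg opprD addrACA.
have Dmul : forall f g, mdivides d (f - psi f) -> mdivides d (g - psi g) ->
    mdivides d ((f * g) - psi (f * g)).
  move=> f g [gf ef] [gg eg]; exists (gf * g + psi f * gg).
  rewrite hM mulrDl -mulrA (mulrC g) mulrA -ef -mulrA -eg.
  by rewrite mulrBl mulrBr addrA subrK.
have D1 : mdivides d (1 - psi 1) by exists 0; rewrite h1 subrr mul0r.
have Dpow : forall f k, mdivides d (f - psi f) -> mdivides d (f ^+ k - psi (f ^+ k)).
  move=> f; elim=> [|k IH] Df; first by rewrite expr0.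
  by rewrite exprS; apply: Dmul => //; apply: IH.
move=> f; rewrite (mpolyE f).
elim/big_rec: _ => [|m g _ Dg]; first by exists 0; rewrite h0 subrr mul0r.
apply: Dadd => //.
have -> : f@_m *: 'X_[m] - psi (f@_m *: 'X_[m]) = f@_m *: ('X_[m] - psi 'X_[m]).
  by rewrite hZ scalerBr.
have : mdivides d ('X_[m] - psi 'X_[m]).
  rewrite mpolyXE_id.
  elim/big_rec: _ => [|i g' _ Dg']; first exact: D1.
  by apply: Dmul => //; apply: Dpow; apply: hX.
by case=> g' e; exists (f@_m *: g'); rewrite e scalerAl.
Qed.

Lemma msymXi (s : 'S_n) i : msym s ('X_i : P) = 'X_(s i).
Proof. by rewrite /msym mmapX mmap1U. Qed.

Lemma div_msym (a b : 'I_n) (f : P) : mdivides (Xd a b) (f - msym (tperm a b) f).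
Proof.
apply: div_closure.
- exact: msymD.
- exact: msymM.
- exact: msym1.
- by move=> c g; rewrite msymZ.
move=> i; rewrite msymXi; case: tpermP => [->|->|_ _].
- by exists 1; rewrite mul1r.
- by exists (-1); rewrite /Xd mulN1r opprB.
- by exists 0; rewrite subrr mul0r.
Qed.


Definition phi (a b : 'I_n) (f : P) : P :=
  mmap (@mpolyC n F) (fun i => if i == a then 'X_b else 'X_i) f.

Lemma phiD a b f g : phi a b (f + g) = phi a b f + phi a b g.
Proof. exact: mmapD. Qed.
Lemma phiM a b f g : phi a b (f * g) = phi a b f * phi a b g.
Proof. exact: rmorphM. Qed.
Lemma phi1 a b : phi a b 1 = 1.
Proof. exact: rmorph1. Qed.
Lemma phiZ a b (c : F) f : phi a b (c *: f) = c *: phi a b f.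
Proof. by rewrite /phi mmapZ mul_mpolyC. Qed.
Lemma phiX a b i : phi a b 'X_i = if i == a then 'X_b else 'X_i.
Proof. by rewrite /phi mmapX mmap1U. Qed.
Lemma phiB a b f g : phi a b (f - g) = phi a b f - phi a b g.
Proof. exact: rmorphB. Qed.

Lemma div_phi a b f : mdivides (Xd a b) (f - phi a b f).
Proof.
apply: div_closure; [exact: phiD|exact: phiM|exact: phi1|exact: phiZ|].
move=> i; rewrite phiX; case: eqP => [->|_].
- by exists 1; rewrite mul1r.
- by exists 0; rewrite subrr mul0r.
Qed.

Lemma phi_Xd a b : phi a b (Xd a b) = 0.
Proof. by rewrite /Xd phiB !phiX eqxx; case: eqP => [->|]; rewrite subrr. Qed.

Lemma mdiv_phiP a b f : mdivides (Xd a b) f <-> phi a b f = 0.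
Proof.
split => [[g ->]|h]; first by rewrite phiM phi_Xd mulr0.
by have := div_phi a b f; rewrite h subr0.
Qed.

Lemma X_inj (i j : 'I_n) : ('X_i : P) = 'X_j -> i = j.
Proof.
move=> e; have := congr1 (fun p : P => p@_U_(i)) e; rewrite /= !mcoeffXU eqxx.
by case: eqP => // _ /eqP; rewrite /= oner_eq0.
Qed.

Lemma Xd_neq0 (a b : 'I_n) : a != b -> Xd a b != 0.
Proof. by move=> ab; rewrite /Xd subr_eq0; apply/eqP => /X_inj /eqP; rewrite (negbTE ab). Qed.

Lemma phi_Xd_neq0 (a b c d : 'I_n) : (a < b)%N -> (c < d)%N -> (a, b) != (c, d) ->
  phi a b (Xd c d) != 0.
Proof.
move=> ab cd neq; rewrite /Xd phiB !phiX.
have H : forall u v : 'I_n, u != v -> ('X_u : P) - 'X_v != 0 by move=> u v; exact: Xd_neq0.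
move: neq; rewrite xpair_eqE !ordE => neq.
case: ifP => ca; case: ifP => da; apply: H; rewrite ordE; move: ca da; rewrite ?ordE; lia.
Qed.

Lemma mdiv_coprime (a b c d : 'I_n) g : (a < b)%N -> (c < d)%N -> (a, b) != (c, d) ->
  mdivides (Xd a b) (g * Xd c d) -> mdivides (Xd a b) g.
Proof.
move=> ab cd neq /mdiv_phiP; rewrite phiM => /eqP; rewrite mulf_eq0 => /orP[/eqP h|h].
  exact/mdiv_phiP.
by case/negP: (phi_Xd_neq0 a b c d ab cd neq).
Qed.

Lemma mdiv_coprime_prod (a b : 'I_n) (S : seq ('I_n * 'I_n)) (g : P) : (a < b)%N ->
  (a, b) \notin S -> all (fun p : 'I_n * 'I_n => (p.1 < p.2)%N) S ->
  mdivides (Xd a b) (g * \prod_(q <- S) Xd q.1 q.2) -> mdivides (Xd a b) g.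
Proof.
move=> ab; elim: S g => [|q S IH] g /=; first by rewrite big_nil mulr1.
rewrite in_cons negb_or => /andP[pq pS] /andP[lq aS].
rewrite big_cons mulrA => /(IH _ pS aS).
by apply: mdiv_coprime => //; case: q pq {lq}.
Qed.

Lemma mdiv_prod (S : seq ('I_n * 'I_n)) (f : P) : uniq S -> all (fun p : 'I_n * 'I_n => (p.1 < p.2)%N) S ->
  (forall p, p \in S -> mdivides (Xd p.1 p.2) f) ->
  mdivides (\prod_(p <- S) Xd p.1 p.2) f.
Proof.
elim: S => [|p S IH] /=.
  by move=> _ _ _; exists f; rewrite big_nil mulr1.
move=> /andP[pS uS] /andP[lp aS] H.
have [g eg] : mdivides (\prod_(q <- S) Xd q.1 q.2) f.
  by apply: IH => // q qS; apply: H; rewrite in_cons qS orbT.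
have : mdivides (Xd p.1 p.2) g.
  apply: (mdiv_coprime_prod _ _ S) => //; first by case: p pS {H lp eg}.
  by rewrite -eg; apply: H; rewrite mem_head.
case=> h eh; exists h; by rewrite big_cons eg eh mulrA.
Qed.
Lemma msize_homog (p : P) d : p != 0 -> p \is d.-homog -> msize p = d.+1.
Proof.
move=> nz hp; have h := dhomog_msize hp.
have e := dhomog_uniq nz hp h.
by rewrite (mpolySpred _ nz) e.
Qed.

Lemma Xd_homog a b : Xd a b \is 1.-homog.
Proof.
have H : forall i : 'I_n, ('X_i : P) \is 1.-homog.
  by move=> i; rewrite dhomogX /= mdeg1.
by rewrite /Xd rpredB //; apply: H.
Qed.

Lemma inv_prod_homog (x : 'S_n) : inv_prod R x \is (len x).-homog.
Proof.
rewrite /inv_prod /len -sum1dep_card.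
apply: (big_ind2 (fun (p : P) (k : nat) => p \is k.-homog)).
- exact: dhomog1.
- by move=> p1 k1 p2 k2 h1 h2; apply: dhomogM.
- by move=> ij _; apply: Xd_homog.
Qed.

Lemma inv_prod_neq0 (x : 'S_n) : inv_prod R x != 0.
Proof.
apply/prodf_neq0 => ij /andP[lt _]; apply: Xd_neq0.
by rewrite ordE neq_ltn lt.
Qed.

Lemma msize_inv_prod (x : 'S_n) : msize (inv_prod R x) = (len x).+1.
Proof. exact: msize_homog (inv_prod_neq0 x) (inv_prod_homog x). Qed.

Lemma inv_prod_div (x : 'S_n) (f : P) :
  (forall j k : 'I_n, Defs.inv_pair x (j, k) -> mdivides (Xd j k) f) ->
  mdivides (inv_prod R x) f.
Proof.
move=> H; rewrite /inv_prod -big_filter.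
apply: (mdiv_prod _ f).
- by rewrite filter_uniq // index_enum_uniq.
- by apply/allP => p; rewrite mem_filter => /andP[/andP[lt _] _].
- by move=> [j k]; rewrite mem_filter => /andP[h _]; apply: H.
Qed.

Lemma gkm_add (p q : 'S_n -> P) : is_gkm_class p -> is_gkm_class q ->
  is_gkm_class (fun u => p u + q u).
Proof.
move=> hp hq u j k jk; have [g1 e1] := hp u j k jk; have [g2 e2] := hq u j k jk.
by exists (g1 + g2); rewrite mulrDl -e1 -e2 opprD addrACA.
Qed.

Lemma gkm_opp (p : 'S_n -> P) : is_gkm_class p -> is_gkm_class (fun u => - p u).
Proof.
move=> hp u j k jk; have [g1 e1] := hp u j k jk.
by exists (- g1); rewrite mulNr -e1; ring.
Qed.

Lemma gkm_mulc (c : P) (p : 'S_n -> P) : is_gkm_class p -> is_gkm_class (fun u => c * p u).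
Proof.
move=> hp u j k jk; have [g1 e1] := hp u j k jk.
by exists (c * g1); rewrite -mulrA -e1 mulrBr.
Qed.

Lemma pcompE (a b : 'S_n) : Defs.pcomp a b = (b * a)%g.
Proof. by []. Qed.

Lemma gkm_class_act (s : 'S_n) (p : 'S_n -> P) : is_gkm_class p -> is_gkm_class (class_act s p).
Proof.
move=> hp u j k jk; rewrite /class_act /poly_act !pcompE.
set u' := (u * s^-1)%g.
have -> : (u * tperm j k * s^-1)%g = (u' * tperm ((s^-1)%g j) ((s^-1)%g k))%g.
  by rewrite -tpermJ /u' /conjg invgK !mulgA mulgKV.
have jk' : (s^-1)%g j != (s^-1)%g k by rewrite (inj_eq perm_inj) ordE; lia.
wlog lt : j k jk jk' / ((s^-1)%g j < (s^-1)%g k)%N.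
  move=> W; case: (ltngtP ((s^-1)%g j) ((s^-1)%g k)) => h; first exact: W.
  - have [g eg] := hp u' ((s^-1)%g k) ((s^-1)%g j) h.
    exists (- msym s g); rewrite tpermC -msymB eg msymM msymB !msymXi !permKV.
    rewrite /Xd; ring.
  - by move: jk'; rewrite ordE h eqxx.
have [g eg] := hp u' ((s^-1)%g j) ((s^-1)%g k) lt.
by exists (msym s g); rewrite -msymB eg msymM msymB !msymXi !permKV.
Qed.

Lemma class_act_comp (a b : 'S_n) (p : 'S_n -> P) u :
  class_act a (class_act b p) u = class_act (b * a)%g p u.
Proof.
rewrite /class_act /poly_act !pcompE -msymMm invMg mulgA.
by [].
Qed.

Lemma class_act1 (p : 'S_n -> P) u : class_act 1 p u = p u.
Proof. by rewrite /class_act /poly_act pcompE invg1 mulg1 msym1m. Qed.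

Lemma vanish (p : 'S_n -> P) (D : nat) : is_gkm_class p ->
  (forall u, p u != 0 -> (msize (p u) <= D)%N) ->
  (forall u, p u != 0 -> (D <= len u)%N) ->
  forall u, p u = 0.
Proof.
move=> hp hs hl u0; apply/eqP/negP => /negP nz0.
case: (@arg_minnP _ u0 (fun u => p u != 0) (fun u => len u) nz0) => x nzx xmin.
have : mdivides (inv_prod R x) (p x).
  apply: inv_prod_div => j k hjk.
  have jk : (j < k)%N by case/andP: hjk.
  have := hp x j k jk; rewrite pcompE.
  have -> : p (x * tperm j k)%g = 0.
    apply/eqP/negP => /negP /xmin; move=> h2; have := leq_ltn_trans h2 (len_tperm_lt _ x j k jk hjk); rewrite ltnn //=.
  by rewrite subr0.
case=> g eg.
have gnz : g != 0 by apply: contraNneq nzx => g0; rewrite eg g0 mul0r.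
have := hs x nzx; have := hl x nzx.
rewrite eg msizeM // ?inv_prod_neq0 // msize_inv_prod.
have : (0 < msize g)%N by rewrite lt0n msize_poly_eq0.
rewrite addnS /=; move: (msize g) (len x) => a b; lia.
Qed.
End Poly.
Arguments Xd {R n}.
Section Main.
Variable R : realType.
Variable n : nat.
Local Notation P := (Cpoly R n).
Variable Omega : 'S_n -> 'S_n -> P.
Hypothesis HOmega : forall v : 'S_n, is_schubert_class v (Omega v).

Lemma msym_homog (s : 'S_n) (p : P) d : p \is d.-homog -> msym s p \is d.-homog.
Proof.
move=> hp; rewrite -(pihomog_dE hp) msym_pihomog; exact: pihomogP.
Qed.

Lemma msize_le_homog (p : P) d : (p != 0 -> p \is d.-homog) -> (msize p <= d.+1)%N.
Proof.
case: (eqVneq p 0) => [->|nz h]; first by rewrite msize0.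
by rewrite (msize_homog _ _ _ _ nz (h isT)).
Qed.

Lemma Om_supp v u : Omega v u != 0 -> bruhat_le v u.
Proof.
case: (HOmega v) => _ hs _ _ nz; apply/negPn/negP => h.
by move: nz; rewrite hs // eqxx.
Qed.

Lemma Om_homog v u : Omega v u != 0 -> Omega v u \is (len v).-homog.
Proof. by case: (HOmega v) => _ _ hh _; apply: hh. Qed.

Lemma Om_gkm v : is_gkm_class (Omega v).
Proof. by case: (HOmega v). Qed.

Lemma Om_diag v : Omega v v = inv_prod R v.
Proof. by case: (HOmega v). Qed.

Lemma lt_trans_b (x v w : 'S_n) : bruhat_lt x v -> bruhat_lt v w -> bruhat_lt x w.
Proof.
move=> /andP[xv lxv] /andP[vw lvw]; apply/andP; split; last exact: bruhat_trans lxv lvw.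
apply/eqP => e; subst x.
have := bruhat_len_lt _ v w lvw vw; have := bruhat_len_le _ w v lxv; lia.
Qed.

Lemma lt_len (v w : 'S_n) : bruhat_lt v w -> (len v < len w)%N.
Proof. by move=> /andP[vw lvw]; apply: bruhat_len_lt. Qed.

Definition LC (w : 'S_n) (f : 'S_n -> P) : Prop := exists c : 'S_n -> P,
  (forall v, bruhat_lt v w -> c v \is (len w - len v).-homog) /\
  (forall u, f u = \sum_(v | bruhat_lt v w) c v * Omega v u).

Lemma LC_ext w f g : LC w f -> (forall u, f u = g u) -> LC w g.
Proof. by move=> [c [h1 h2]] e; exists c; split => // u; rewrite -e. Qed.
Arguments LC_ext {w f g}.

Lemma LC0 w : LC w (fun _ => 0).
Proof.
exists (fun _ => 0); split => [v _|u]; first exact: dhomog0.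
by rewrite big1 // => v _; rewrite mul0r.
Qed.

Lemma LC_add w f g : LC w f -> LC w g -> LC w (fun u => f u + g u).
Proof.
move=> [c [h1 h2]] [d [k1 k2]]; exists (fun v => c v + d v); split.
  by move=> v vw; apply: rpredD; [apply: h1|apply: k1].
by move=> u; rewrite h2 k2 -big_split /=; apply: eq_bigr => v _; rewrite mulrDl.
Qed.

Lemma LC_sum w (r : seq 'S_n) (Q : pred 'S_n) (G : 'S_n -> 'S_n -> P) :
  (forall i, Q i -> LC w (G i)) -> LC w (fun u => \sum_(i <- r | Q i) G i u).
Proof.
move=> H; elim: r => [|i r IH].
  by apply: (LC_ext (LC0 w)) => u; rewrite big_nil.
case Qi: (Q i).
  by apply: (LC_ext (LC_add _ _ _ (H i Qi) IH)) => u; rewrite big_cons Qi.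
by apply: (LC_ext IH) => u; rewrite big_cons Qi.
Qed.

Lemma LC_gen w v (h : P) : bruhat_lt v w -> h \is (len w - len v).-homog ->
  LC w (fun u => h * Omega v u).
Proof.
move=> vw hh; exists (fun x => if x == v then h else 0); split.
  by move=> x xw; case: eqP => [->|_]; [exact: hh|exact: dhomog0].
move=> u; rewrite (bigD1 v) //= eqxx big1 ?addr0 // => x /andP[_ xv].
by rewrite (negbTE xv) mul0r.
Qed.

Lemma LC_lift w v (h : P) f : bruhat_lt v w -> h \is (len w - len v).-homog ->
  LC v f -> LC w (fun u => h * f u).
Proof.
move=> vw hh [c [h1 h2]].
exists (fun x => if bruhat_lt x v then h * c x else 0); split.
  move=> x xw; case: ifP => xv; last exact: dhomog0.
  have e : (len w - len x = (len w - len v) + (len v - len x))%N.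
    have := lt_len _ _ vw; have := lt_len _ _ xv; lia.
  by rewrite e; apply: dhomogM => //; apply: h1.
move=> u; rewrite h2 big_distrr /=.
rewrite (big_mkcond (fun x => bruhat_lt x v)) (big_mkcond (fun x => bruhat_lt x w)) /=.
apply: eq_bigr => x _; case: ifP => xv.
  by rewrite (lt_trans_b _ _ _ xv vw) mulrA.
by case: ifP => _; rewrite ?mul0r.
Qed.

Definition Pgood (s : 'S_n) := forall w, LC w (fun u => class_act s (Omega w) u - Omega w u).

Lemma Pgood1 : Pgood 1.
Proof. by move=> w; apply: (LC_ext (LC0 w)) => u; rewrite class_act1 subrr. Qed.

Lemma Pgood_mul a b : Pgood a -> Pgood b -> Pgood (b * a)%g.
Proof.
move=> Pa Pb w.
have [c [hc ec]] := Pb w.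
have E : forall u, class_act (b * a)%g (Omega w) u - Omega w u =
   (class_act a (Omega w) u - Omega w u) +
   \sum_(v | bruhat_lt v w) (msym a (c v) * Omega v u +
                           msym a (c v) * (class_act a (Omega v) u - Omega v u)).
  move=> u; set u' := Defs.pcomp a^-1 u.
  have e' : class_act b (Omega w) u' = Omega w u' + \sum_(v | bruhat_lt v w) c v * Omega v u'.
    by rewrite -ec addrC subrK.
  have ca : forall v, class_act a (Omega v) u = msym a (Omega v u') by [].
  rewrite -class_act_comp.
  have -> : class_act a (class_act b (Omega w)) u = msym a (class_act b (Omega w) u') by [].
  rewrite e' !ca.
  have -> : \sum_(v | bruhat_lt v w) (msym a (c v) * Omega v u +
      msym a (c v) * (msym a (Omega v u') - Omega v u)) =
      \sum_(v | bruhat_lt v w) msym a (c v * Omega v u').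
    by apply: eq_bigr => v _; rewrite -mulrDr addrC subrK msymM.
  by rewrite msymD raddf_sum addrAC.
have H : forall v, bruhat_lt v w -> LC w (fun u => msym a (c v) * Omega v u +
                           msym a (c v) * (class_act a (Omega v) u - Omega v u)).
  move=> v vw; have hv := msym_homog a _ _ (hc v vw).
  exact: LC_add _ _ _ (LC_gen w v _ vw hv) (LC_lift w v _ _ vw hv (Pa v)).
have X := LC_add _ _ _ (Pa w) (LC_sum w (index_enum _) (fun v => bruhat_lt v w) _ H).
apply: (LC_ext X) => u /=; symmetry; exact: E.
Qed.


Lemma Pgood_adj (j k : 'I_n) (s : 'S_n) : (k : nat) = j.+1 -> s = tperm j k -> Pgood s.
Proof.
move=> kj Es w.
have jk : (j < k)%N by lia.
have jnk : j != k by rewrite ordE; lia.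
have sV : (s^-1)%g = s by rewrite Es tpermV.
have ss : (s * s = 1)%g by rewrite Es tperm2.
have usK : forall u : 'S_n, (u * s * s)%g = u by move=> u; rewrite -mulgA ss mulg1.
have msK : forall p : P, msym s (msym s p) = p by move=> p; rewrite -msymMm ss msym1m.
pose alpha : P := Xd j k.
have msa : msym s alpha = - alpha.
  by rewrite /alpha /Xd msymB !msymXi Es tpermL tpermR opprB.
have anz : alpha != 0 by apply: Xd_neq0.
pose q u := class_act s (Omega w) u - Omega w u.
have qE : forall u, q u = msym s (Omega w (u * s)%g) - Omega w u.
  by move=> u; rewrite /q /class_act /poly_act pcompE sV.
have dq : forall u, mdivides alpha (q u).
  move=> u; rewrite qE.
  have [g1 e1] : mdivides alpha (Omega w (u * s)%g - msym s (Omega w (u * s)%g)).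
    by rewrite Es; apply: div_msym.
  have [g2 e2] : mdivides alpha (Omega w (u * s)%g - Omega w u).
    by have := Om_gkm w (u * s)%g j k jk; rewrite pcompE -Es usK.
  by exists (g2 - g1); rewrite mulrBl -e1 -e2; ring.
have ex : forall u, exists g : P, q u == g * alpha.
  by move=> u; have [g e] := dq u; exists g; rewrite e.
pose r u := xchoose (ex u).
have er : forall u, q u = r u * alpha by move=> u; exact/eqP/(xchooseP (ex u)).
have qs : forall u, q (u * s)%g = - msym s (q u).
  by move=> u; rewrite !qE usK msymB msK; ring.
have rs : forall u, r (u * s)%g = msym s (r u).
  move=> u; apply: (mulIf anz); rewrite -er qs er msymM msa; ring.
have rgkm : is_gkm_class r.
  move=> u j' k' jk'.
  case: (eqVneq (j', k') (j, k)) => [[-> ->]|ne].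
    rewrite pcompE -Es rs.
    have : mdivides (Xd j k) (r u - msym (tperm j k) (r u)) by apply: div_msym.
    by rewrite -Es.
  have h : mdivides (Xd j' k') (q u - q (Defs.pcomp (tperm j' k') u)).
    exact: (gkm_add _ _ _ _ (gkm_class_act _ _ s _ (Om_gkm w)) (gkm_opp _ _ _ (Om_gkm w))) u j' k' jk'.
  rewrite !er -mulrBl in h.
  exact: (mdiv_coprime _ _ j' k' j k _ jk' jk ne h).
have rsize : forall u, (msize (r u) <= len w)%N.
  move=> u; case: (eqVneq (r u) 0) => [->|nz]; first by rewrite msize0.
  have hq : (msize (q u) <= (len w).+1)%N.
    rewrite qE; apply: leq_trans (msizeD_le _ _) _; rewrite msizeN geq_max.
    apply/andP; split.
    - apply: msize_le_homog => nz'; apply: msym_homog; apply: Om_homog.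
      by apply: contraNneq nz' => ->; rewrite msym0.
    - by apply: msize_le_homog => nz'; exact: Om_homog.
  move: hq; rewrite er msizeM // (msize_homog _ _ _ _ anz (Xd_homog _ _ j k)).
  by move: (msize (r u)) (len w) => a b; rewrite addnS /=; lia.
have rsupp : forall u, r u != 0 -> bruhat_le w u \/ bruhat_le w (u * s)%g.
  move=> u nz; have : q u != 0 by rewrite er mulf_neq0.
  rewrite qE; case: (eqVneq (Omega w u) 0) => [e|h]; last by left; exact: Om_supp.
  case: (eqVneq (Omega w (u * s)%g) 0) => [e'|h']; last by right; exact: Om_supp.
  by rewrite e e' msym0 subrr eqxx.
have ladj : forall u : 'S_n,
    (len (u * s)%g + Defs.inv_pair u (j,k) = len u + ~~ Defs.inv_pair u (j,k))%N.
  by move=> u; rewrite Es; apply: len_adj.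
have leq_eq : forall x, bruhat_le w x -> len x = len w -> x = w.
  move=> x wx e; case: (eqVneq x w) => // nxw.
  have wnx : w != x by rewrite eq_sym.
  by have := bruhat_len_lt _ w x wx wnx; lia.
case iw: (Defs.inv_pair w (j,k)); last first.
  have r0 : forall u, r u = 0.
    apply: (vanish _ _ r (len w) rgkm (fun u _ => rsize u)) => u nz.
    case: (rsupp u nz) => h; first exact: bruhat_len_le.
    case: (leqP (len w) (len u)) => // lt.
    have h1 := bruhat_len_le _ _ _ h.
    have h2 := ladj u; have h3 := ladj w; rewrite iw /= in h3.
    case iu: (Defs.inv_pair u (j,k)) in h2; first by simpl in h2; lia.
    have e : (u * s)%g = w by apply: leq_eq => //; simpl in h2; lia.
    have eu : u = (w * s)%g by rewrite -e usK.
    by rewrite eu in lt; lia.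
  apply: (LC_ext (LC0 w)) => u.
  by change (0 = q u); rewrite er r0 mul0r.
have [v ev] : {v : 'S_n | v = (w * s)%g} by exists (w * s)%g.
have lv : (len v).+1 = len w by have := ladj w; rewrite iw -ev /=; lia.
have vw : bruhat_lt v w.
  apply/andP; split.
    by apply/eqP => e; rewrite e in lv; lia.
  have hab : ((w^-1)%g k < (w^-1)%g j)%N by case/andP: iw.
  have va : v ((w^-1)%g k) = j by rewrite ev permM permKV Es tpermR.
  have vb : v ((w^-1)%g j) = k by rewrite ev permM permKV Es tpermL.
  have := bruhat_swap _ v _ _ hab; rewrite va vb => /(_ jk).
  by rewrite -Es ev usK.
have rsupp2 : forall u, r u != 0 -> (len v <= len u)%N /\ (len u = len v -> u = v).
  move=> u nz; case: (rsupp u nz) => h.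
    by have := bruhat_len_le _ _ _ h; split => [|e]; lia.
  have h1 := bruhat_len_le _ _ _ h; have h2 := ladj u.
  case iu: (Defs.inv_pair u (j,k)) in h2; first by simpl in h2; split => [|e]; lia.
  simpl in h2; split => [|e]; first lia.
  have e' : (u * s)%g = w by apply: leq_eq => //; lia.
  by rewrite ev -e' usK.
have [g eg] : mdivides (inv_prod R v) (r v).
  apply: inv_prod_div => j' k' hjk.
  have jk' : (j' < k')%N by case/andP: hjk.
  have := rgkm v j' k' jk'.
  have -> : r (Defs.pcomp (tperm j' k') v) = 0.
    apply/eqP/negP => /negP /rsupp2 [h _].
    by have := len_tperm_lt _ v j' k' jk' hjk; rewrite -pcompE; lia.
  by rewrite subr0.
have gsize : (msize g <= 1)%N.
  case: (eqVneq g 0) => [->|gnz]; first by rewrite msize0.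
  have := rsize v; rewrite eg msizeM // ?inv_prod_neq0 // msize_inv_prod -lv.
  by move: (msize g) (len v) => a b; rewrite addnS /=; lia.
have gC := msize1_polyC gsize.
pose r' u := r u - g * Omega v u.
have r'gkm : is_gkm_class r'.
  exact: (gkm_add _ _ _ _ rgkm (gkm_opp _ _ _ (gkm_mulc _ _ g _ (Om_gkm v)))).
have r'0 : forall u, r' u = 0.
  apply: (vanish _ _ r' (len v).+1 r'gkm) => u nz.
    rewrite /r'; apply: leq_trans (msizeD_le _ _) _; rewrite msizeN geq_max.
    rewrite lv rsize /= gC mul_mpolyC; apply: leq_trans (msizeZ_le _ _) _.
    by rewrite -lv; apply: msize_le_homog; apply: Om_homog.
  case: (eqVneq u v) => [euv|nuv].
    by move: nz; rewrite /r' euv eg Om_diag subrr eqxx.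
  case: (eqVneq (r u) 0) => [ru0|runz].
    have : Omega v u != 0 by apply: contraNneq nz => h; rewrite /r' ru0 h mulr0 subrr.
    move=> /Om_supp vu; have : v != u by rewrite eq_sym.
    by move/(bruhat_len_lt _ _ _ vu).
  have [h1 h2] := rsupp2 u runz.
  case: (eqVneq (len u) (len v)) => [e|ne]; first by move: nuv; rewrite (h2 e) eqxx.
  by move: ne h1; move: (len u) (len v) => a b /eqP; lia.
apply: (LC_ext (LC_gen w v (g * alpha) vw _)) => [|u].
  by rewrite -lv subSnn gC mul_mpolyC; apply: dhomogZ; exact: Xd_homog.
change (g * alpha * Omega v u = q u); rewrite er.
have := r'0 u; rewrite /r' => /eqP; rewrite subr_eq0 => /eqP ->.
by rewrite mulrAC.
Qed.

Lemma Pgood_tperm (x y : 'I_n) : Pgood (tperm x y).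
Proof.
wlog xy : x y / (x < y)%N.
  move=> W; case: (ltngtP x y) => h; first exact: W.
    by rewrite tpermC; apply: W.
  have -> : x = y by apply: val_inj.
  by rewrite tperm1; exact: Pgood1.
suff H : forall d (x y : 'I_n), (y : nat) = (x + d.+1)%N -> Pgood (tperm x y).
  by apply: (H (y - x.+1)%N); lia.
clear x y xy; elim=> [|d IH] x y e.
  by apply: (Pgood_adj x y) => //; rewrite e addn1.
have y'lt : (y.-1 < n)%N by have := ltn_ord y; lia.
pose y' := Ordinal y'lt.
have e1 : (y' : nat) = (x + d.+1)%N by rewrite /= e; lia.
have e2 : (y : nat) = y'.+1 by rewrite /=; lia.
have G1 := IH x y' e1.
have G2 := Pgood_adj y' y (tperm y' y) e2 erefl.
have cj : tperm x y = (tperm y' y * tperm x y' * tperm y' y)%g.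
  have := tpermJ x y' (tperm y' y); rewrite /conjg tpermV tpermL tpermD; last first.
  - by rewrite ordE; lia.
  - by rewrite ordE /=; lia.
  by move=> <-; rewrite mulgA.
rewrite cj; exact: (Pgood_mul _ _ G2 (Pgood_mul _ _ G1 G2)).
Qed.

Lemma Pgood_all (s : 'S_n) : Pgood s.
Proof.
case: (prod_tpermP s) => ts -> _; elim: ts => [|t ts IH].
  by rewrite big_nil; exact: Pgood1.
by rewrite big_cons; exact: (Pgood_mul _ _ IH (Pgood_tperm _ _)).
Qed.

End Main.

Theorem mainTheorem6 (R : realType) (n : nat)
  (Omega : 'S_n -> 'S_n -> Cpoly R n)
  (HOmega : forall v : 'S_n, is_schubert_class v (Omega v))
  (s w : 'S_n) :
  exists c : 'S_n -> Cpoly R n,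
    (forall v : 'S_n, bruhat_lt v w -> c v != 0 ->
       (msize (c v)).-1 = (len w - len v)%N)
    /\ (forall u : 'S_n,
          class_act s (Omega w) u
          = Omega w u + \sum_(v : 'S_n | bruhat_lt v w) c v * Omega v u).
Proof.
have [c [hc he]] := Pgood_all R n Omega HOmega s w.
exists c; split.
  by move=> v vw cnz; rewrite (msize_homog _ _ _ _ cnz (hc v vw)).
by move=> u; rewrite -he addrC subrK.
Qed.
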